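(* Let $k\ge2$, let $p_1,\dots,p_k$ be distinct primes, $n=p_1\cdots p_k$, and let $$f(x)=(1-x^{n})\cdot\frac{\prod_{i=2}^k\big(1-x^{p_2\cdots p_k/p_i}\big)}{\prod_{i=1}^k\big(1-x^{n/p_i}\big)}\in\mathbb{Z}[[x]].$$ Let $f^*$ be the unique polynomial of degree $<n$ with $f^*\equiv f\pmod{x^n}$. Then every coefficient of $f^*$ has absolute value at most $\binom{k-2}{\lfloor (k-2)/2\rfloor}$.
   Context: $f$ is viewed as a formal power series (its denominator has constant term $1$). In the exponents, $p_2\cdots p_k/p_i$ means $p_2\cdots p_k$ divided by $p_i$. *)

(* Defs.v *)
From HB Require Import structures.
From mathcomp Require Import all_boot all_order all_algebra.
Set Implicit Arguments. Unset Strict Implicit. Unset Printing Implicit Defensive.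
Import Order.TTheory GRing.Theory Num.Theory.
Local Open Scope ring_scope.

(* Primes are indexed p 0, ..., p (k-1); p 0 plays the role of p_1. *)

Definition nprod (k : nat) (p : nat -> nat) : nat := (\prod_(i < k) p i)%N.

Definition mprod (k : nat) (p : nat -> nat) : nat := (\prod_(1 <= i < k) p i)%N.

Definition numer (k : nat) (p : nat -> nat) : {poly int} :=
  (1 - 'X^(nprod k p)) *
  \prod_(1 <= i < k) (1 - 'X^(mprod k p %/ p i)%N).

Definition denom (k : nat) (p : nat -> nat) : {poly int} :=
  \prod_(i < k) (1 - 'X^(nprod k p %/ p i)%N).

(* g agrees with the power series numer/denom modulo x^N:
   since denom is a unit in Z[[x]], g == numer/denom (mod x^N)
   iff g * denom == numer (mod x^N). *)
Definition congr_series (N : nat) (g num den : {poly int}) : Prop :=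
  forall i : nat, (i < N)%N -> (g * den - num)`_i = 0.

(* Main.v *)
Require Import Defs.
From HB Require Import structures.
From mathcomp Require Import all_boot all_order all_algebra.
Import Order.TTheory GRing.Theory Num.Theory.
From mathcomp Require Import zify ring lra.
Local Open Scope ring_scope.
Set Implicit Arguments. Unset Strict Implicit.

Lemma bin_le_mid (n r : nat) : ('C(n, r) <= 'C(n, n./2))%N.
Proof.
have up : forall r, (r < n./2)%N -> ('C(n, r) <= 'C(n, r.+1))%N.
  move=> s hs; have := mul_bin_left n s.
  have h : (s.+1 <= n - s)%N by move: hs; rewrite -divn2; move=> hs; lia.
  move=> e; rewrite -(leq_pmul2l (ltn0Sn s)) e leq_mul2r h orbT //.
have dn : forall r, (n./2 <= r)%N -> ('C(n, r.+1) <= 'C(n, r))%N.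
  move=> s hs; have := mul_bin_left n s.
  have h : (n - s <= s.+1)%N by move: hs; rewrite -divn2; move=> hs; lia.
  move=> e; rewrite -(leq_pmul2l (ltn0Sn s)) e leq_mul2r h orbT //.
case: (leqP r n./2) => hr.
  have H : forall j, (j + r <= n./2)%N -> ('C(n, r) <= 'C(n, j + r))%N.
    elim=> [|j IH] hj //.
    apply: leq_trans (IH (ltnW hj)) _; rewrite addSn; apply: up; exact: hj.
  by have := H (n./2 - r)%N; rewrite subnK // leqnn; apply.
have H : forall j, ('C(n, j + n./2) <= 'C(n, n./2))%N.
  elim=> [|j IH] //.
  apply: leq_trans _ IH; rewrite addSn; apply: dn; exact: leq_addl.
by have := H (r - n./2)%N; rewrite subnK // ltnW.
Qed.

Lemma LYM (T : finType) (n : nat) : forall (G : {set T}) (W : {set {set T}}),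
  #|G| = n -> (forall A, A \in W -> A \subset G) ->
  (forall A B, A \in W -> B \in W -> A \subset B -> A = B) ->
  \sum_(A in W) (('C(n, #|A|))%:R^-1 : rat) <= 1.
Proof.
elim: n => [|n IH] G W hG hsub hanti; case: (boolP (G \in W)) => hGW.
- have -> : W = [set G].
    apply/setP => A; rewrite inE; apply/idP/eqP => [hA|->//].
    exact: hanti hA hGW (hsub A hA).
  by rewrite big_set1 hG binn invr1.
- rewrite big1 // => A hA; exfalso; move: hGW.
  have := hsub A hA; move/subset_leq_card; rewrite hG leqn0 cards_eq0 => /eqP A0.
  have := hsub A hA; rewrite A0 => /subset_leq_card.
  by move: hG => /eqP; rewrite cards_eq0 => /eqP ->; rewrite -A0 hA.
- have -> : W = [set G].
    apply/setP => A; rewrite inE; apply/idP/eqP => [hA|->//].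
    exact: hanti hA hGW (hsub A hA).
  by rewrite big_set1 hG binn invr1.
have hlt : forall A, A \in W -> (#|A| < n.+1)%N.
  move=> A hA; rewrite -hG; apply: proper_card; rewrite properEneq hsub // andbT.
  by apply/eqP => eAG; move: hGW; rewrite -eAG hA.
have step : forall A, A \in W ->
   (('C(n.+1, #|A|))%:R^-1 : rat) =
   \sum_(x in G :\: A) ((n.+1)%:R^-1 * ('C(n, #|A|))%:R^-1).
  move=> A hA; rewrite sumr_const cardsD (setIidPr (hsub A hA)) hG.
  have e := mul_bin_down n.+1 #|A|; rewrite /= in e.
  have hb : ('C(n.+1, #|A|) > 0)%N by rewrite bin_gt0 ltnW // hlt.
  have hc : ('C(n, #|A|) > 0)%N by rewrite bin_gt0 -ltnS hlt.
  have hd : (n.+1 - #|A| > 0)%N by rewrite subn_gt0 hlt.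
  have key : ((n.+1)%:R * ('C(n, #|A|))%:R : rat) = (n.+1 - #|A|)%:R * ('C(n.+1, #|A|))%:R.
    by rewrite -!natrM e.
  rewrite -[X in _ = X]mulr_natr -invfM key invfM [X in _ = X]mulrC mulrA mulfV ?mul1r //.
  by rewrite pnatr_eq0 -lt0n.
rewrite (eq_bigr _ step).
rewrite (exchange_big_dep (fun x => x \in G)) /=; last first.
  by move=> A x _; rewrite inE => /andP[].
apply: (@le_trans _ _ (\sum_(x in G) (n.+1)%:R^-1)); last first.
  by rewrite sumr_const hG -[_ *+ _]mulr_natr mulVf // pnatr_eq0.
apply: ler_sum => x hx.
rewrite -mulr_sumr; rewrite -[X in _ <= X]mulr1; apply: ler_wpM2l.
  by rewrite invr_ge0 ler0n.
have := IH (G :\ x) [set A in W | x \notin A].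
rewrite big_mkcond /= [X in _ -> X <= _]big_mkcond /=.
have -> : \sum_i (if i \in [set A in W | x \notin A] then ('C(n, #|i|))%:R^-1 else 0 : rat) =
          \sum_i (if (i \in W) && (x \in G :\: i) then ('C(n, #|i|))%:R^-1 else 0).
  apply: eq_bigr => A _; rewrite !inE hx andbT //.
apply.
- by move: hG; rewrite (cardsD1 x G) hx add1n => -[].
- by move=> A; rewrite inE => /andP[hA hxA]; rewrite subsetD1 hsub.
- by move=> A B; rewrite !inE => /andP[hA _] /andP[hB _]; apply: hanti.
Qed.

Lemma sperner (T : finType) (G : {set T}) (W : {set {set T}}) :
  (forall A, A \in W -> A \subset G) ->
  (forall A B, A \in W -> B \in W -> A \subset B -> A = B) ->
  (#|W| <= 'C(#|G|, #|G|./2))%N.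
Proof.
move=> hsub hanti; have := @LYM T #|G| G W (erefl _) hsub hanti.
set B := 'C(#|G|, #|G|./2).
have hB : (0 < B)%N by rewrite bin_gt0 -divn2 leq_div.
move=> h.
have : (#|W|%:R / B%:R : rat) <= 1.
  apply: le_trans h; rewrite -sum1_card natr_sum mulr_suml; apply: ler_sum => A hA.
  rewrite mul1r lef_pV2 ?posrE ?ltr0n ?bin_gt0 ?subset_leq_card ?hsub //.
  by rewrite ler_nat bin_le_mid.
  by rewrite -divn2 leq_div.
by rewrite ler_pdivrMr ?ltr0n // mul1r ler_nat.
Qed.

Definition ind (b : bool) : int := if b then 1 else 0.

Lemma sum_split_set (I : finType) (i0 : I) (F : {set I} -> int) :
  \sum_(T : {set I}) F T = \sum_(T : {set I} | i0 \notin T) (F T + F (i0 |: T)).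
Proof.
rewrite (bigID (fun T : {set I} => i0 \in T)) /= addrC big_split /=; congr (_ + _).
rewrite (reindex_onto (fun T => i0 |: T) (fun T => T :\ i0)) /=; last first.
  by move=> T hT; rewrite setD1K.
apply: eq_bigl => T; rewrite setU11 /=.
case: (boolP (i0 \in T)) => h.
  apply/negbTE; apply/eqP => e; have : i0 \in (i0 |: T) :\ i0 by rewrite e.
  by rewrite setD11.
by apply/eqP; rewrite setU1K.
Qed.

Lemma comb_core (M : nat) (d : 'I_M.+1 -> int) (C : int) : (forall i, 0 <= d i) ->
  `| \sum_(T : {set 'I_M.+1}) (-1) ^+ #|T| * ind (\sum_(i in T) d i <= C) |
    <= ('C(M, M./2))%:R.
Proof.
move=> hd.
pose i0 := [arg min_(i < ord0) d i]%O.
have hmin : forall j, d i0 <= d j.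
  by rewrite /i0; case: arg_minP => // i _ h j; apply: h.
rewrite (@sum_split_set _ i0).
apply: le_trans (ler_norm_sum _ _ _) _.
pose W := [set T : {set 'I_M.+1} | (i0 \notin T) && (C - d i0 < \sum_(i in T) d i <= C)].
apply: (@le_trans _ _ (\sum_(T : {set 'I_M.+1} | i0 \notin T)
      ind (C - d i0 < \sum_(i in T) d i <= C))).
  apply: ler_sum => T hT.
  rewrite big_setU1 //= cardsU1 hT /= exprS mulN1r mulNr -mulrBr normrM normrX normrN1 expr1n mul1r.
  set v := \sum_(i in T) d i.
  case: (lerP v C) => hv; case: (lerP (d i0 + v) C) => hv2 /=.
  - by rewrite (_ : C - d i0 < v = false) //; apply/negbTE; rewrite -leNgt; lra.
  - by rewrite (_ : C - d i0 < v = true) //; lra.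
  - by have := hd i0; lra.
  - by rewrite andbF subrr normr0.
have -> : \sum_(T : {set 'I_M.+1} | i0 \notin T) ind (C - d i0 < \sum_(i in T) d i <= C)
          = (#|W|%:R : int).
  rewrite -sum1_card natr_sum big_mkcond [in RHS]big_mkcond /=; apply: eq_bigr => T _.
  by rewrite inE /ind; case: (i0 \notin T) => //=; case: ifP.
rewrite ler_nat.
have hG : #|[set~ i0]| = M by rewrite cardsC1 card_ord.
have := @sperner _ [set~ i0] W; rewrite hG; apply.
  by move=> A; rewrite inE => /andP[h _]; apply/subsetP => x hx; rewrite !inE; apply/eqP => e; move: h; rewrite -e hx.
move=> A B; rewrite !inE => /andP[hA /andP[h1 h2]] /andP[hB /andP[h3 h4]] hAB.
apply/eqP; rewrite eqEsubset hAB /=; apply/subsetP => x hx.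
case: (boolP (x \in A)) => // hxA; exfalso.
have : \sum_(i in B) d i >= \sum_(i in A) d i + d x.
  rewrite [X in _ <= X](big_setID A) /= (setIidPr hAB) lerD2l (bigD1 x) /=; last by rewrite !inE hxA hx.
  rewrite lerDl sumr_ge0 //.
have := hmin x; lra.
Qed.

Lemma sign_card (I : finType) (A : {set I}) :
  (-1) ^+ #|A| = \prod_(i : I) (if i \in A then -1 else 1 : int).
Proof. by rewrite -big_mkcond /= prodr_const. Qed.

Lemma comb (M : nat) (a0 a1 : 'I_M.+1 -> int) (C : int) :
  `| \sum_(T : {set 'I_M.+1}) (-1) ^+ #|T| *
       ind (\sum_i (if i \in T then a1 i else a0 i) <= C) | <= ('C(M, M./2))%:R.
Proof.
pose Z := [set i | a1 i < a0 i].
pose b0 i := if i \in Z then a1 i else a0 i.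
pose b1 i := if i \in Z then a0 i else a1 i.
pose sd (T : {set 'I_M.+1}) := (T :\: Z) :|: (Z :\: T).
have sdE : forall T i, (i \in sd T) = (i \in T) (+) (i \in Z).
  by move=> T i; rewrite /sd in_setU !in_setD; case: (i \in T); case: (i \in Z).
have sdK : cancel sd sd.
  by move=> T; apply/setP => i; rewrite !sdE; case: (i \in T); case: (i \in Z).
rewrite (reindex_inj (can_inj sdK)) /=.
have -> : \sum_(T : {set 'I_M.+1}) (-1) ^+ #|sd T| *
       ind (\sum_i (if i \in sd T then a1 i else a0 i) <= C)
    = (-1) ^+ #|Z| * \sum_(T : {set 'I_M.+1}) (-1) ^+ #|T| *
       ind (\sum_(i in T) (b1 i - b0 i) <= C - \sum_i b0 i).
  rewrite mulr_sumr; apply: eq_bigr => T _.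
  rewrite mulrA; congr (_ * ind _).
    rewrite !sign_card -big_split /=; apply: eq_bigr => i _.
    by rewrite sdE; case: (i \in T); case: (i \in Z); rewrite ?mulr1 ?mul1r ?mulrNN ?mulr1.
  rewrite lerBrDr addrC.
  have -> : \sum_i (if i \in sd T then a1 i else a0 i) =
            \sum_i (b0 i + (if i \in T then b1 i - b0 i else 0)).
    apply: eq_bigr => i _; rewrite sdE /b0 /b1.
    by case: (i \in T); case: (i \in Z) => /=; rewrite ?addr0 // addrC subrK.
  by rewrite big_split /= -big_mkcond.
rewrite normrM normrX normrN1 expr1n mul1r.
apply: comb_core => i; rewrite subr_ge0 /b0 /b1.
case: ifP; rewrite inE => h; first by apply: ltW.
by rewrite leNgt h.
Qed.
Definition Hyp (K : nat) (p : nat -> nat) :=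
  (forall i, (i < K.+2)%N -> prime (p i)) /\
  (forall i j, (i < K.+2)%N -> (j < K.+2)%N -> p i = p j -> i = j).

Definition mi (K : nat) (p : nat -> nat) (i : nat) : nat := (mprod K.+2 p %/ p i.+1)%N.

Section NT.
End NT.

Lemma mprodE K p : mprod K.+2 p = (\prod_(i < K.+1) p i.+1)%N.
Proof. by rewrite /mprod big_add1 /= big_mkord. Qed.

Lemma nprodE K p : nprod K.+2 p = (p 0 * mprod K.+2 p)%N.
Proof. by rewrite /nprod big_ord_recl mprodE. Qed.

Lemma hp_prime K p (H : Hyp K p) i : (i < K.+1)%N -> prime (p i.+1).
Proof. by case: H => h _ hi; apply: h. Qed.

Lemma hp0_prime K p (H : Hyp K p) : prime (p 0).
Proof. by case: H => h _; apply: h. Qed.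

Lemma hp_gt1 K p (H : Hyp K p) i : (i < K.+1)%N -> (1 < p i.+1)%N.
Proof. by move=> hi; apply: prime_gt1; have := hp_prime H hi. Qed.

Lemma hp_gt0 K p (H : Hyp K p) i : (i < K.+1)%N -> (0 < p i.+1)%N.
Proof. by move=> hi; move: (hp_gt1 H hi); apply: ltnW. Qed.

Lemma hp0_gt1 K p (H : Hyp K p) : (1 < p 0)%N.
Proof. by apply: prime_gt1; apply: hp0_prime H. Qed.

Lemma hp_neq K p (H : Hyp K p) i j : (i < K.+1)%N -> (j < K.+1)%N -> i != j -> p i.+1 != p j.+1.
Proof.
case: H => _ h hi hj hij; apply/eqP => e; have [eij] := h i.+1 j.+1 hi hj e.
by rewrite eij eqxx in hij.
Qed.

Lemma hp_neq0 K p (H : Hyp K p) i : (i < K.+1)%N -> p 0 != p i.+1.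
Proof. by case: H => _ h hi; apply/eqP => e; have := h 0%N i.+1 isT hi e. Qed.

Lemma miE K p (H : Hyp K p) (i : 'I_K.+1) :
  mi K p i = (\prod_(j < K.+1 | j != i) p j.+1)%N.
Proof.
rewrite /mi mprodE (bigD1 i) //= mulKn //.
by have := hp_gt0 H (ltn_ord i).
Qed.

Lemma m_split K p (H : Hyp K p) (i : 'I_K.+1) : mprod K.+2 p = (p i.+1 * mi K p i)%N.
Proof. by rewrite miE // mprodE (bigD1 i). Qed.

Lemma m_gt0 K p (H : Hyp K p) : (0 < mprod K.+2 p)%N.
Proof.
rewrite mprodE prodn_gt0 // => i; by have := hp_gt0 H (ltn_ord _).
Qed.

Lemma mi_gt0 K p (H : Hyp K p) (i : 'I_K.+1) : (0 < mi K p i)%N.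
Proof.
rewrite miE // prodn_cond_gt0 // => j _; by have := hp_gt0 H (ltn_ord _).
Qed.

Lemma dvd_mi K p (H : Hyp K p) (i j : 'I_K.+1) : j != i -> (p j.+1 %| mi K p i)%N.
Proof. by move=> hji; rewrite miE // (bigD1 j) //= dvdn_mulr. Qed.

Lemma ndvd_mi K p (H : Hyp K p) (i : 'I_K.+1) : ~~ (p i.+1 %| mi K p i)%N.
Proof.
rewrite miE // Euclid_dvd_prod; last by have := hp_prime H (ltn_ord i).
apply/negP; elim/big_ind: _ => //.
  by move=> x y hx hy /orP[].
move=> j hj; rewrite dvdn_prime2 ?(hp_prime H (ltn_ord _)) //.
move: hj; rewrite eq_sym => hj; apply/negP; by have := hp_neq H (ltn_ord i) (ltn_ord j) hj.
Qed.

Lemma cop_mi K p (H : Hyp K p) (i : 'I_K.+1) : coprime (p i.+1) (mi K p i).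
Proof. by rewrite prime_coprime ?(hp_prime H (ltn_ord i)) // ndvd_mi. Qed.

Lemma cop0 K p (H : Hyp K p) i : (i < K.+1)%N -> coprime (p 0) (p i.+1).
Proof.
move=> hi; rewrite prime_coprime ?(hp0_prime H) // dvdn_prime2 ?(hp0_prime H) ?(hp_prime H hi) //.
by have := hp_neq0 H hi.
Qed.

Lemma dvd_all K p (H : Hyp K p) y :
  (forall i : 'I_K.+1, p i.+1 %| y)%N -> (mprod K.+2 p %| y)%N.
Proof.
move=> hy; rewrite mprodE.
have : forall r, (r <= K.+1)%N -> (\prod_(i < r) p i.+1 %| y)%N; last by apply.
elim=> [|r IH] hr; first by rewrite big_ord0 dvd1n.
rewrite big_ord_recr /= Gauss_dvd.
  by rewrite IH ?(ltnW hr) //; have := hy (Ordinal hr).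
rewrite coprime_sym prime_coprime ?(hp_prime H hr) // Euclid_dvd_prod ?(hp_prime H hr) //.
apply/negP; elim/big_ind: _ => //.
  by move=> x0 y0 hx hy0 /orP[].
move=> j _; rewrite dvdn_prime2 ?(hp_prime H hr) ?(hp_prime H (ltn_trans (ltn_ord j) hr)) //.
have hne : r != j by rewrite neq_ltn ltn_ord orbT.
apply/negP; by have := hp_neq H hr (ltn_trans (ltn_ord j) hr) hne.
Qed.

Lemma ndiv0 K p (H : Hyp K p) : (nprod K.+2 p %/ p 0 = mprod K.+2 p)%N.
Proof. by rewrite nprodE mulKn // prime_gt0 // (hp0_prime H). Qed.

Lemma ndivi K p (H : Hyp K p) (i : 'I_K.+1) : (nprod K.+2 p %/ p i.+1 = p 0 * mi K p i)%N.
Proof. by rewrite nprodE (m_split H i) mulnCA mulKn //; by have := hp_gt0 H (ltn_ord i). Qed.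

Definition xw K p (i : nat) (b : bool) (r : nat) : nat :=
  (chinese (p 0) (p i.+1) b (r * (egcdn (mi K p i) (p i.+1)).1) %% (p 0 * p i.+1))%N.

Lemma inv_mi K p (H : Hyp K p) (i : 'I_K.+1) :
  (((egcdn (mi K p i) (p i.+1)).1 * mi K p i) %% p i.+1 = 1)%N.
Proof.
case: (egcdnP (p i.+1) (mi_gt0 H i)) => km kn e _ /=.
have g1 : gcdn (mi K p i) (p i.+1) = 1%N.
  by apply/eqP; rewrite -/(coprime _ _) coprime_sym cop_mi.
rewrite e g1 modnMDl modn_small //.
by have := hp_gt1 H (ltn_ord i).
Qed.

Lemma cancel_mi K p (H : Hyp K p) (i : 'I_K.+1) w w' :
  ((w * mi K p i) %% p i.+1 = (w' * mi K p i) %% p i.+1)%N ->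
  (w %% p i.+1 = w' %% p i.+1)%N.
Proof.
set u := (egcdn (mi K p i) (p i.+1)).1.
have E : forall z, (z %% p i.+1 = ((z * mi K p i) %% p i.+1 * u) %% p i.+1)%N.
  move=> z; rewrite modnMml -mulnA mulnC -modnMml.
  by rewrite [(mi K p i * u)%N]mulnC (inv_mi H i) mul1n.
by move=> h; rewrite E (E w') h.
Qed.

Lemma xw_lt K p (H : Hyp K p) (i : 'I_K.+1) b r : (xw K p i b r < p 0 * p i.+1)%N.
Proof.
rewrite /xw ltn_pmod // muln_gt0 prime_gt0 ?(hp0_prime H) //=.
by have := hp_gt0 H (ltn_ord i).
Qed.

Lemma xw_mod0 K p (H : Hyp K p) (i : 'I_K.+1) (b : bool) r : (xw K p i b r %% p 0 = b)%N.
Proof.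
rewrite /xw modn_dvdm ?dvdn_mulr // chinese_modl ?(cop0 H (ltn_ord i)) //.
rewrite modn_small //; apply: leq_trans (hp0_gt1 H); by case: b.
Qed.

Lemma xw_modq K p (H : Hyp K p) (i : 'I_K.+1) b r :
  ((xw K p i b r * mi K p i) %% p i.+1 = r %% p i.+1)%N.
Proof.
rewrite -modnMml /xw modn_dvdm ?dvdn_mull // chinese_modr ?(cop0 H (ltn_ord i)) //.
rewrite modnMml -mulnA -modnMmr (inv_mi H i) muln1 //.
Qed.

Lemma xw_uniq K p (H : Hyp K p) (i : 'I_K.+1) (b : bool) r w :
  (w < p 0 * p i.+1)%N -> (w %% p 0 = b)%N ->
  ((w * mi K p i) %% p i.+1 = r %% p i.+1)%N -> w = xw K p i b r.
Proof.
move=> hw h0 hq.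
have h1 : (w %% p 0 = xw K p i b r %% p 0)%N by rewrite h0 xw_mod0.
have h2 : (w %% p i.+1 = xw K p i b r %% p i.+1)%N.
  by apply: (cancel_mi H); rewrite hq xw_modq.
have : (w == xw K p i b r %[mod p 0 * p i.+1])%N.
  by rewrite chinese_remainder ?(cop0 H (ltn_ord i)) // h1 h2 !eqxx.
by move=> /eqP; rewrite !modn_small // (xw_lt H).
Qed.

Definition aa K p (i : nat) (b : bool) (e : nat) : nat :=
  (xw K p i b (e %% p i.+1) * mi K p i)%N.


Lemma indE b : ind b = b%:R. Proof. by case: b. Qed.

Definition Psi K p : {poly int} := \sum_(j < p 0) 'X^(j * mprod K.+2 p).
Definition Gp K p (i : nat) (b : bool) : {poly int} :=
  \sum_(t < nprod K.+2 p) 'X^((t * p 0 + b) * mi K p i).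

Lemma n_eq K p (H : Hyp K p) (i : 'I_K.+1) : nprod K.+2 p = (p 0 * p i.+1 * mi K p i)%N.
Proof. by rewrite nprodE (m_split H i) mulnA. Qed.

Lemma coef_Psi K p (H : Hyp K p) e : (e < nprod K.+2 p)%N ->
  (Psi K p)`_e = ind (mprod K.+2 p %| e)%N.
Proof.
move=> he; rewrite /Psi coef_sum.
have hm := m_gt0 H.
case: (boolP (mprod K.+2 p %| e)%N) => hd.
  have hj0 : (e %/ mprod K.+2 p < p 0)%N by rewrite ltn_divLR // -nprodE.
  rewrite (bigD1 (Ordinal hj0)) //= big1 ?addr0.
    by rewrite coefXn divnK // eqxx.
  move=> j hj; rewrite coefXn; case: eqP => // ej; exfalso; move/negP: hj; apply.
  by apply/eqP; apply: val_inj => /=; rewrite ej mulnK.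
rewrite big1 // => j _; rewrite coefXn; case: eqP => // ej; exfalso; move/negP: hd; apply.
by rewrite ej dvdn_mull.
Qed.

Lemma modB_dvd q d e : (d <= e)%N -> (q %| d)%N -> ((e - d) %% q = e %% q)%N.
Proof.
move=> hde hq; apply/eqP; rewrite eq_sym eqn_mod_dvd ?leq_subr // subKn //.
Qed.

Lemma coef_main K p (H : Hyp K p) (T : {set 'I_K.+1}) (s : seq 'I_K.+1) :
  uniq s -> forall e, (e < nprod K.+2 p)%N ->
  (Psi K p * \prod_(i <- s) Gp K p i (i \in T))`_e =
  ind ((\sum_(i <- s) aa K p i (i \in T) e <= e)%N &&
       (mprod K.+2 p %| e - \sum_(i <- s) aa K p i (i \in T) e)%N).
Proof.
elim: s => [|i s IH] /= hu e he.
  by rewrite big_nil mulr1 coef_Psi // big_nil leq0n subn0.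
move/andP: hu => [his hu].
rewrite big_cons mulrCA /Gp mulr_suml coef_sum big_cons.
set b := i \in T.
set A := \sum_(j <- s) aa K p j (j \in T) e.
set q := p i.+1.
pose d (t : nat) := ((t * p 0 + b) * mi K p i)%N.
have hq1 : (1 < q)%N by have := hp_gt1 H (ltn_ord i).
have hp01 := hp0_gt1 H.
have hb : (b < p 0)%N by apply: (leq_trans _ hp01); rewrite ltnS leq_b1.
have hne : forall j, j \in s -> j != i.
  by move=> j hj; apply/eqP => eji; move: his; rewrite -eji hj.
rewrite (eq_bigr (fun t : 'I_(nprod K.+2 p) => if (d t <= e)%N then
     ind ((A <= e - d t)%N && (mprod K.+2 p %| e - d t - A)%N) else 0)); last first.
  move=> t _; rewrite coefXnM -/(d t); case: ifP => hlt.
    by rewrite /d leqNgt hlt.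
  have hdt : (d t <= e)%N by rewrite /d leqNgt hlt.
  rewrite hdt IH //; last by apply: leq_ltn_trans (leq_subr _ _) he.
  have -> // : \sum_(j <- s) aa K p j (j \in T) (e - d t) = A.
  apply: eq_big_seq => j hj; rewrite /aa modB_dvd //.
  by rewrite /d dvdn_mull // dvd_mi // hne.
set x := xw K p i b (e %% q).
have hxlt : (x < p 0 * q)%N by apply: xw_lt.
have hqn : (q <= nprod K.+2 p)%N.
  apply: dvdn_leq; first by rewrite nprodE muln_gt0 prime_gt0 ?(hp0_prime H) ?m_gt0.
  by rewrite (n_eq H i) -mulnA dvdn_mull // dvdn_mulr.
have ht0 : (x %/ p 0 < nprod K.+2 p)%N.
  apply: (leq_trans _ hqn); rewrite ltn_divLR ?(ltnW hp01) // mulnC //.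
have hx : (x %% p 0 = b)%N := xw_mod0 H i b (e %% q).
have dt0 : d (x %/ p 0)%N = (x * mi K p i)%N by rewrite /d -hx -divn_eq.
have ea : aa K p i b e = (x * mi K p i)%N by [].
rewrite (bigD1 (Ordinal ht0)) //= big1 ?addr0.
  rewrite dt0 ea; case: (leqP (x * mi K p i) e) => ha.
    by rewrite leq_subRL // subnDA.
  by rewrite (_ : (x * mi K p i + A <= e)%N = false) //; apply/negbTE; rewrite -ltnNge ltn_addr.
move=> t ht; case: ifP => // hde.
case: (boolP (A <= e - d t)%N) => //= hA; case: (boolP (mprod K.+2 p %| e - d t - A)%N) => //= hm.
exfalso; move/negP: ht; apply; apply/eqP; apply: val_inj => /=.
have hqA : (q %| A)%N.
  rewrite /A big_seq; apply: dvdn_sum => j hj.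
  by rewrite /aa dvdn_mull // dvd_mi // eq_sym hne.
have hqe : (q %| e - d t)%N.
  rewrite -(subnK hA) dvdn_addr //.
  by apply: dvdn_trans hm; rewrite (m_split H i) dvdn_mulr.
have hw : (t * p 0 + b)%N = x.
  apply: (xw_uniq H).
  - rewrite -(ltn_pmul2r (mi_gt0 H i)) -(n_eq H i); exact: leq_ltn_trans hde he.
  - by rewrite modnMDl modn_small.
  - rewrite modn_mod; apply/eqP; rewrite eq_sym eqn_mod_dvd //.
rewrite -hw divnMDl; last by apply: ltnW.
by rewrite divn_small ?addn0.
Qed.

Definition PP K p : {poly int} :=
  Psi K p * \prod_(i < K.+1) (Gp K p i false - Gp K p i true).

Lemma sign_cardR (R : pzRingType) (I : finType) (A : {set I}) :
  (-1) ^+ #|A| = \prod_(i : I) (if i \in A then -1 else 1 : R).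
Proof. by rewrite -big_mkcond /= prodr_const. Qed.

Lemma coef_signM (n : nat) (Q : {poly int}) e : ((-1) ^+ n * Q)`_e = (-1) ^+ n * Q`_e.
Proof.
elim: n => [|n IH]; first by rewrite !expr0 !mul1r.
by rewrite !exprS !mulN1r !mulNr coefN IH.
Qed.

Lemma A_dvd K p (H : Hyp K p) (T : {set 'I_K.+1}) (e : nat) :
  (\sum_(i : 'I_K.+1) aa K p i (i \in T) e <= e)%N ->
  (mprod K.+2 p %| e - \sum_(i : 'I_K.+1) aa K p i (i \in T) e)%N.
Proof.
move=> hA; apply: (dvd_all H) => i.
rewrite -eqn_mod_dvd // (bigD1 i) //=.
set R := (\sum_(j | j != i) aa K p j (j \in T) e)%N.
have hR : (p i.+1 %| R)%N.
  by apply: dvdn_sum => j hj; rewrite /aa dvdn_mull // dvd_mi // eq_sym.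
rewrite eq_sym -(divnK hR) addnC modnMDl /aa xw_modq // modn_mod //.
Qed.

Lemma PP_coef K p (H : Hyp K p) e : (e < nprod K.+2 p)%N ->
  (PP K p)`_e = \sum_(T : {set 'I_K.+1}) (-1) ^+ #|T| *
      ind (\sum_(i : 'I_K.+1) aa K p i (i \in T) e <= e)%N.
Proof.
move=> he; rewrite /PP.
rewrite (eq_bigr (fun i : 'I_K.+1 => - Gp K p i true + Gp K p i false)); last first.
  by move=> i _; rewrite addrC.
rewrite bigA_distr mulr_sumr coef_sum; apply: eq_bigr => T _.
have -> : \prod_(i : 'I_K.+1) (if i \in T then - Gp K p i true else Gp K p i false) =
          (-1) ^+ #|T| * \prod_(i : 'I_K.+1) Gp K p i (i \in T).
  rewrite (sign_cardR _ T) -big_split /=; apply: eq_bigr => i _.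
  by case: (i \in T); rewrite ?mulN1r ?mul1r.
rewrite mulrCA coef_signM; congr (_ * _).
rewrite (coef_main H T (index_enum_uniq _) he).
case: (boolP (\sum_(i : 'I_K.+1) aa K p i (i \in T) e <= e)%N) => h //=.
by rewrite A_dvd.
Qed.

Lemma PP_bound K p (H : Hyp K p) e : (e < nprod K.+2 p)%N ->
  `|(PP K p)`_e| <= ('C(K, K./2))%:R.
Proof.
move=> he; rewrite PP_coef //.
have := @comb K (fun i : 'I_K.+1 => (aa K p i false e)%:R) (fun i : 'I_K.+1 => (aa K p i true e)%:R) (e%:R).
congr (`|_| <= _); apply: eq_bigr => T _; congr (_ * ind _).
rewrite -(ler_nat int) natr_sum; congr (_ <= _); apply: eq_bigr => i _.
by case: (i \in T).
Qed.

Definition low (n : nat) (q : {poly int}) := forall i, (i < n)%N -> q`_i = 0.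

Lemma low_mulr n q r : low n q -> low n (q * r).
Proof.
move=> hq i hi; rewrite coefM big1 // => j _; rewrite hq ?mul0r //.
exact: leq_ltn_trans (ltnSE (ltn_ord j)) hi.
Qed.

Lemma low_mull n q r : low n q -> low n (r * q).
Proof. by rewrite mulrC; apply: low_mulr. Qed.

Lemma low_add n q r : low n q -> low n r -> low n (q + r).
Proof. by move=> hq hr i hi; rewrite coefD hq ?hr ?addr0. Qed.

Lemma low_opp n q : low n q -> low n (- q).
Proof. by move=> hq i hi; rewrite coefN hq ?oppr0. Qed.

Lemma low_Xn n c : (0 < c)%N -> low n 'X^(n * c).
Proof.
move=> hc i hi; rewrite coefXn; case: eqP => // e; exfalso.
by move: hi; rewrite e ltnNge leq_pmulr.
Qed.

Lemma low_prod (I : finType) (F : I -> {poly int}) n :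
  (forall i, low n (F i - 1)) -> low n (\prod_i F i - 1).
Proof.
move=> hF; elim/big_rec: _ => [|i x _ hx]; first by rewrite subrr => j _; rewrite coef0.
have -> : F i * x - 1 = (F i - 1) * x + (x - 1) by rewrite mulrBl mul1r addrA subrK.
by apply: low_add => //; apply: low_mulr.
Qed.

Lemma uniq_low n h r : low n (h * r) -> r`_0 = 1 -> low n h.
Proof.
move=> hl h0.
have key : forall i, (i < n)%N -> (forall j, (j < i)%N -> h`_j = 0) -> h`_i = 0.
  move=> i hi hlt; have := hl i hi; rewrite coefM big_ord_recr /= subnn h0 mulr1 big1 ?add0r //.
  by move=> j _; rewrite hlt ?mul0r.
elim/ltn_ind => i IH hi; apply: key => // j hj; apply: IH => //; exact: ltn_trans hj hi.
Qed.

Lemma geo (c a : nat) :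
  (\sum_(j < c) 'X^(j * a)) * (1 - 'X^a) = 1 - 'X^(c * a) :> {poly int}.
Proof.
elim: c => [|c IH]; first by rewrite big_ord0 mul0r mul0n expr0 subrr.
by rewrite big_ord_recr /= mulrDl IH mulrBr mulr1 -exprD mulSnr addrA subrK.
Qed.

Lemma denomE K p (H : Hyp K p) : denom K.+2 p =
  (1 - 'X^(mprod K.+2 p)) * \prod_(i < K.+1) (1 - 'X^(p 0 * mi K p i)).
Proof.
rewrite /denom big_ord_recl /= ndiv0 //; congr (_ * _); apply: eq_bigr => i _.
by rewrite /bump leq0n /= add1n (ndivi H).
Qed.

Lemma numerE K p : numer K.+2 p =
  (1 - 'X^(nprod K.+2 p)) * \prod_(i < K.+1) (1 - 'X^(mi K p i)).
Proof. by rewrite /numer big_add1 /= big_mkord. Qed.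

Lemma PP_denom K p (H : Hyp K p) :
  low (nprod K.+2 p) (PP K p * denom K.+2 p - numer K.+2 p).
Proof.
set n := nprod K.+2 p.
have G : forall i : 'I_K.+1, (Gp K p i false - Gp K p i true) * (1 - 'X^(p 0 * mi K p i)) =
     (1 - 'X^(mi K p i)) * (1 - 'X^(n * (p 0 * mi K p i))) :> {poly int}.
  move=> i; rewrite /Gp -sumrB.
  have -> : \sum_(t < n) ('X^((t * p 0 + false) * mi K p i) - 'X^((t * p 0 + true) * mi K p i))
      = (\sum_(t < n) 'X^(t * (p 0 * mi K p i))) * (1 - 'X^(mi K p i)) :> {poly int}.
    rewrite mulr_suml; apply: eq_bigr => t _.
    by rewrite mulrBr mulr1 -exprD addn0 mulnDl mul1n mulnA.
  by rewrite mulrC mulrA [_ * (\sum_(t < n) _)]mulrC geo mulrC.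
have E : PP K p * denom K.+2 p = numer K.+2 p * \prod_(i < K.+1) (1 - 'X^(n * (p 0 * mi K p i))).
  rewrite /PP (denomE H) numerE mulrACA -big_split /= (eq_bigr _ (fun i _ => G i)).
  rewrite big_split /= mulrA; congr (_ * _ * _).
  by rewrite /Psi geo -nprodE.
rewrite E -{2}(mulr1 (numer K.+2 p)) -mulrBr; apply: low_mull; apply: low_prod => i.
rewrite addrAC subrr add0r; apply: low_opp; apply: low_Xn.
by rewrite muln_gt0 prime_gt0 ?(hp0_prime H) ?mi_gt0.
Qed.

Lemma denom0 K p (H : Hyp K p) : (denom K.+2 p)`_0 = 1.
Proof.
rewrite (denomE H) coef0M coef0_prod coefB coef1 coefXn.
rewrite (_ : (0 == mprod K.+2 p)%N = false); last by rewrite eq_sym; apply/negbTE; rewrite -lt0n (m_gt0 H).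
rewrite subr0 mul1r big1 // => i _; rewrite coefB coef1 coefXn.
rewrite (_ : (0 == p 0 * mi K p i)%N = false) ?subr0 //.
by rewrite eq_sym; apply/negbTE; rewrite -lt0n muln_gt0 prime_gt0 ?(hp0_prime H) ?mi_gt0.
Qed.

Unset Implicit Arguments.

Theorem lemma2 (k : nat) (p : nat -> nat)
  (hk : (2 <= k)%N)
  (hprime : forall i, (i < k)%N -> prime (p i))
  (hdist : forall i j, (i < k)%N -> (j < k)%N -> p i = p j -> i = j) :
  (exists g : {poly int}, (size g <= nprod k p)%N /\
     congr_series (nprod k p) g (numer k p) (denom k p)) /\
  (forall g : {poly int}, (size g <= nprod k p)%N ->
     congr_series (nprod k p) g (numer k p) (denom k p) ->
     forall j : nat, `|g`_j| <= ('C(k - 2, (k - 2)./2))%:Z).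
Proof.
case: k hk hprime hdist => [|[|K]] // _ hprime hdist.
have H : Hyp K p by split.
set n := nprod K.+2 p.
pose g0 := \poly_(e < n) (PP K p)`_e.
have lg0 : low n (g0 - PP K p).
  by move=> i hi; rewrite coefB coef_poly hi subrr.
have cg0 : low n (g0 * denom K.+2 p - numer K.+2 p).
  have -> : g0 * denom K.+2 p - numer K.+2 p =
     (g0 - PP K p) * denom K.+2 p + (PP K p * denom K.+2 p - numer K.+2 p).
    by rewrite mulrBl addrA subrK.
  by apply: low_add; [apply: low_mulr | apply: PP_denom].
split.
  by exists g0; split; [apply: size_poly | exact: cg0].
move=> g hg hc j.
have hl : low n (g - g0).
  apply: (uniq_low (r := denom K.+2 p)); last exact: denom0.
  have -> : (g - g0) * denom K.+2 p =
      (g * denom K.+2 p - numer K.+2 p) - (g0 * denom K.+2 p - numer K.+2 p).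
    by rewrite mulrBl opprB addrA subrK.
  by apply: low_add => //; apply: low_opp.
have -> : (K.+2 - 2 = K)%N by rewrite subSS subSS subn0.
case: (ltnP j n) => hj.
  have := hl j hj; rewrite coefB => /eqP; rewrite subr_eq0 => /eqP ->.
  rewrite coef_poly hj; by have := PP_bound H hj; rewrite natz.
by rewrite nth_default ?normr0 // (leq_trans hg hj).
Qed.
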